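(* With the notation of the context, for all $f\neq f'$ in $[n]$, all $0\le r<d$, all $\lambda\ge0$, and every fixed choice of $(\sigma_1,b_1),\dots,(\sigma_r,b_r)$, \[h_r(f,f';\sigma_1,b_1,\dots,\sigma_r,b_r)\ge\mathbb{E}_{\sigma_{r+1},b_{r+1}}\,h_{r+1}(f,f';\sigma_1,b_1,\dots,\sigma_r,b_r,\sigma_{r+1},b_{r+1}),\] where $\sigma_{r+1}$ is uniform among odd integers in $[n]$ and $b_{r+1}$ is independently uniform in $[n]$.
   Context: $n,B$ are powers of $2$ with $2\le B\le n$, $F\ge2$ even, $\epsilon=(1/4)^{F-1}$, and $\hat G$ is a flat filter with $B$ buckets and sharpness $F$: a sequence in $\mathbb{R}^n$ indexed by $\mathbb{Z}_n$ (representatives in $\{-n/2,\dots,n/2-1\}$), symmetric about $0$, with $\hat G_f\in[0,1]$ for all $f$, $\hat G_f\ge1-\epsilon$ for $|f|\le n/(2B)$, and $\hat G_f\le\epsilon\,(n/(B|f|))^{F-1}$ for $|f|\ge n/B$. $M(\lambda)=e^{\lambda\epsilon}[(2/B+1/n)(e^{\lambda(1-\epsilon)}-1)+1]$. For $\sigma,b\in[n]$: $\pi_{\sigma,b}(f)=\sigma(f-b)\bmod n$, $h_{\sigma,b}(f)=\lfloor(B/n)\pi_{\sigma,b}(f)+1/2\rfloor$, $o_{f,\sigma,b}(f')=\pi_{\sigma,b}(f')-(n/B)h_{\sigma,b}(f)\bmod n$; $o_{f,\ell}$ abbreviates $o_{f,\sigma_\ell,b_\ell}$. For $d\ge1$,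 $\beta>0$: $h_r(f,f';\sigma_1,b_1,\dots,\sigma_r,b_r)=e^{-\lambda\beta}\exp(\lambda\sum_{\ell=1}^r\hat G_{o_{f,\ell}(f')})M(\lambda)^{d-r}$. *)

(* Defs.v *)
From Stdlib Require Import Reals Lra Lia ZArith List.
Open Scope R_scope.

Definition Rsum_nat (m : nat) (g : nat -> R) : R :=
  fold_right Rplus 0 (map g (seq 0 m)).

(* representative of x mod n in {-n/2, ..., n/2 - 1} *)
Definition zrep (n : Z) (x : Z) : Z :=
  ((x + n / 2) mod n - n / 2)%Z.

(* a filter indexed by Z_n: G is read at the representative *)
Definition Gat (n : Z) (G : Z -> R) (x : Z) : R := G (zrep n x).

Definition eps (F : nat) : R := (/ 4) ^ (F - 1).

Definition flat_filter (n B F : nat) (G : Z -> R) : Prop :=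
  (forall x : Z, Gat (Z.of_nat n) G (- x) = Gat (Z.of_nat n) G x) /\
  (forall f : Z, (- (Z.of_nat n / 2) <= f < Z.of_nat n / 2)%Z ->
     0 <= G f <= 1 /\
     (IZR (Z.abs f) <= INR n / (2 * INR B) -> G f >= 1 - eps F) /\
     (IZR (Z.abs f) >= INR n / INR B ->
        G f <= eps F * (INR n / (INR B * IZR (Z.abs f))) ^ (F - 1))).

Definition Mfun (n B F : nat) (lam : R) : R :=
  exp (lam * eps F) *
  ((2 / INR B + 1 / INR n) * (exp (lam * (1 - eps F)) - 1) + 1).

Definition piZ (n sigma b f : Z) : Z := (sigma * (f - b)) mod n.

(* h_{sigma,b}(f) = floor((B/n) pi + 1/2) = floor((2 B pi + n) / (2 n)) *)
Definition hZ (n B sigma b f : Z) : Z :=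
  ((2 * B * piZ n sigma b f + n) / (2 * n))%Z.

Definition oZ (n B f sigma b f' : Z) : Z :=
  (piZ n sigma b f' - (n / B) * hZ n B sigma b f) mod n.

(* h_r(f, f'; (sigma_1,b_1),...,(sigma_r,b_r)), r = length sb *)
Definition hr (n B F d : nat) (G : Z -> R) (lam beta : R) (f f' : Z)
    (sb : list (Z * Z)) : R :=
  exp (- lam * beta) *
  exp (lam * fold_right Rplus 0
         (map (fun p => Gat (Z.of_nat n) G
                 (oZ (Z.of_nat n) (Z.of_nat B) f (fst p) (snd p) f')) sb)) *
  Mfun n B F lam ^ (d - length sb).

(* Main.v *)
Require Import Defs.
From Stdlib Require Import Reals ZArith List.
From Stdlib Require Import Lra Lia Znumtheory.
Open Scope R_scope.

Definition RS {A} (l : list A) (g : A -> R) : R := fold_right Rplus 0 (map g l).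

Lemma RS_le {A} (l : list A) g1 g2 :
  (forall x, In x l -> g1 x <= g2 x) -> RS l g1 <= RS l g2.
Proof.
  induction l as [|a l IH]; simpl; intros H; unfold RS in *; simpl.
  - lra.
  - apply Rplus_le_compat; [apply H; now left|apply IH; intros; apply H; now right].
Qed.

Lemma RS_ext {A} (l : list A) g1 g2 :
  (forall x, In x l -> g1 x = g2 x) -> RS l g1 = RS l g2.
Proof.
  induction l as [|a l IH]; simpl; intros H; unfold RS in *; simpl.
  - lra.
  - rewrite H by now left. rewrite IH; auto.
Qed.

Lemma RS_lin {A} (l : list A) g c d :
  RS l (fun x => c * (d + g x)) = c * (d * INR (length l) + RS l g).
Proof.
  induction l as [|a l IH]; unfold RS in *; simpl.
  - ring.
  - rewrite IH. destruct (length l); simpl; ring.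
Qed.

Lemma RS_scal {A} (l : list A) g c :
  RS l (fun x => c * g x) = c * RS l g.
Proof.
  induction l as [|a l IH]; unfold RS in *; simpl.
  - ring.
  - rewrite IH. ring.
Qed.

Lemma RS_ind_len {A} (l : list A) (P : A -> bool) :
  RS l (fun x => if P x then 1 else 0) = INR (length (filter P l)).
Proof.
  induction l as [|a l IH]; unfold RS in *; simpl.
  - reflexivity.
  - rewrite IH. destruct (P a); simpl length; [rewrite S_INR|]; ring.
Qed.

Lemma RS_double {A B} (l1 : list A) (l2 : list B) (P : A -> B -> bool) :
  RS l1 (fun s => RS l2 (fun b => if P s b then 1 else 0)) =
  INR (length (filter (fun x => P (fst x) (snd x)) (list_prod l1 l2))).
Proof.
  induction l1 as [|a l1 IH].
  - reflexivity.
  - unfold RS at 1; simpl. fold (RS l1 (fun s => RS l2 (fun b => if P s b then 1 else 0))).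
    rewrite IH, filter_app, length_app, plus_INR, RS_ind_len. f_equal. f_equal.
    clear IH. induction l2 as [|c l2 IH2]; simpl; auto.
    destruct (P a c); simpl; auto.
Qed.

Lemma NoDup_prod {A B} (l1 : list A) (l2 : list B) :
  NoDup l1 -> NoDup l2 -> NoDup (list_prod l1 l2).
Proof.
  induction 1 as [|a l1 Ha Hl1 IH]; intros H2; simpl; [constructor|].
  apply NoDup_app; auto.
  - clear -H2. induction H2; simpl; constructor; auto.
    rewrite in_map_iff. intros [y [Hy1 Hy2]]. inversion Hy1; subst; auto.
  - intros [x y] Hx Hy. apply in_map_iff in Hx. destruct Hx as [z [Hz1 Hz2]].
    inversion Hz1; subst. apply in_prod_iff in Hy. tauto.
Qed.

Lemma NoDup_map_in {A B} (f : A -> B) (l : list A) :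
  (forall x y, In x l -> In y l -> f x = f y -> x = y) -> NoDup l -> NoDup (map f l).
Proof.
  intros Hf Hl. induction Hl as [|a l Ha Hl IH]; simpl; constructor.
  - rewrite in_map_iff. intros [y [Hy1 Hy2]].
    assert (y = a) by (apply Hf; simpl; auto). subst; auto.
  - apply IH. intros; apply Hf; simpl; auto.
Qed.

Lemma count_inj (S T L : nat) (P : nat -> nat -> bool) (Phi : nat -> nat -> nat) :
  (forall s b, (s < S)%nat -> (b < T)%nat -> P s b = true -> (Phi s b < L)%nat) ->
  (forall s1 b1 s2 b2, (s1 < S)%nat -> (b1 < T)%nat -> (s2 < S)%nat -> (b2 < T)%nat ->
     P s1 b1 = true -> P s2 b2 = true -> Phi s1 b1 = Phi s2 b2 -> s1 = s2 /\ b1 = b2) ->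
  Rsum_nat S (fun s => Rsum_nat T (fun b => if P s b then 1 else 0)) <= INR L.
Proof.
  intros Hb Hi. unfold Rsum_nat.
  change (RS (seq 0 S) (fun s => RS (seq 0 T) (fun b => if P s b then 1 else 0)) <= INR L).
  rewrite RS_double. apply le_INR.
  set (l := filter _ _).
  rewrite <- (length_map (fun x => Phi (fst x) (snd x)) l).
  rewrite <- (length_seq L 0).
  apply NoDup_incl_length.
  - apply NoDup_map_in.
    + intros [s1 b1] [s2 b2] H1 H2 He. unfold l in *.
      apply filter_In in H1, H2. destruct H1 as [H1 P1], H2 as [H2 P2].
      apply in_prod_iff in H1, H2. rewrite !in_seq in H1, H2. simpl in *.
      destruct (Hi s1 b1 s2 b2) as [E1 E2]; try lia; auto.
    + apply NoDup_filter, NoDup_prod; apply seq_NoDup.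
  - intros c Hc. apply in_map_iff in Hc. destruct Hc as [[s b] [<- Hx]].
    unfold l in Hx. apply filter_In in Hx. destruct Hx as [H1 P1].
    apply in_prod_iff in H1. rewrite !in_seq in H1. apply in_seq. simpl in *.
    specialize (Hb s b). split; [lia| apply Hb; auto; lia].
Qed.

Section ZS.
Local Open Scope Z_scope.

Lemma odd_ex (x : Z) : Z.odd x = true -> exists t, x = 2*t+1.
Proof. intros H. apply Z.odd_spec in H. destruct H as [t Ht]. exists t; lia. Qed.

Lemma pow2_gauss (a x u : Z) : 0 <= a -> Z.odd u = true -> (2^a | x*u) -> (2^a | x).
Proof.
  intros Ha Hu Hd. apply Gauss with u.
  - rewrite Z.mul_comm; exact Hd.
  - apply rel_prime_sym, Zpow_facts.rel_prime_Zpower_r; auto.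
    apply rel_prime_sym, prime_rel_prime; [apply prime_2|].
    intros [c Hc]. subst. rewrite Z.odd_mul in Hu. simpl in Hu.
    rewrite Bool.andb_false_r in Hu. discriminate.
Qed.

Lemma valuation (x : Z) : x <> 0 -> exists j u, 0 <= j /\ x = 2^j * u /\ Z.odd u = true.
Proof.
  induction x as [x IH] using Z_lt_abs_induction. intros Hx.
  destruct (Z.odd x) eqn:Ho.
  - exists 0, x. split; [lia|split; [rewrite Z.pow_0_r; lia|auto]].
  - assert (Hm : x mod 2 = 0).
    { rewrite Zmod_odd, Ho. reflexivity. }
    assert (Hx2 : x = 2 * (x/2)) by (rewrite (Z.div_mod x 2) at 1; lia).
    destruct (IH (x/2)) as [j [u [Hj [Hxu Hu]]]]; [lia|lia|].
    exists (j+1), u. split; [lia|split; auto].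
    rewrite Z.pow_add_r by lia. simpl. lia.
Qed.

Lemma o_decomp N Bz M s b f f' : N > 0 -> Bz > 0 -> Bz * M = N ->
  exists c, zrep N (oZ N Bz f s b f') =
     piZ N s b f + s*(f'-f) - M * hZ N Bz s b f + N*c.
Proof.
  intros HN HB HBM.
  assert (HM : N / Bz = M) by (rewrite <- HBM, Z.mul_comm, Z.div_mul; lia).
  unfold zrep, oZ. rewrite HM. unfold piZ at 1 2.
  set (h := hZ N Bz s b f).
  rewrite !Z.mod_eq by lia.
  set (a := s * (f' - b) / N).
  set (c0 := s * (f - b) / N).
  set (x := (s * (f' - b) - N * a - M * h) / N).
  set (y := (s * (f' - b) - N * a - M * h - N * x + N / 2) / N).
  exists (c0 - a - x - y). ring.
Qed.

Lemma delta_bound N Bz M s b f : N > 0 -> Bz > 0 -> Bz * M = N ->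
  - M <= 2 * (piZ N s b f - M * hZ N Bz s b f) < M.
Proof.
  intros HN HB HBM. unfold hZ.
  set (p := piZ N s b f).
  pose proof (Z.div_mod (2*Bz*p+N) (2*N)) as E.
  pose proof (Z.mod_pos_bound (2*Bz*p+N) (2*N)) as R.
  set (h := (2*Bz*p+N)/(2*N)) in *.
  set (r := (2*Bz*p+N) mod (2*N)) in *.
  subst N. nia.
Qed.

Lemma no_hit N Bz M P Q' u s b f f' :
  N > 0 -> Bz > 0 -> Bz * M = N -> N = P * (2*Q') -> 2*M <= P ->
  f' - f = P * u -> Z.odd u = true -> Z.odd s = true ->
  Z.abs (zrep N (oZ N Bz f s b f')) < M -> False.
Proof.
  intros HN HB HBM HPQ HPM HD Hu Hs Hz.
  destruct (o_decomp N Bz M s b f f' HN HB HBM) as [c Hc].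
  pose proof (delta_bound N Bz M s b f HN HB HBM) as Hd.
  rewrite Hc in Hz. rewrite HD in Hz.
  set (p := piZ N s b f) in *. set (h := hZ N Bz s b f) in *.
  destruct (odd_ex _ Hu) as [tu Htu]. destruct (odd_ex _ Hs) as [ts Hts].
  assert (Hw : p + s * (P*u) - M*h + N*c - (p - M*h) = P * (2*(2*ts*tu+ts+tu + Q'*c)+1))
    by (rewrite HPQ, Htu, Hts; ring).
  set (w := (2*ts*tu+ts+tu + Q'*c)) in Hw.
  apply Z.abs_lt in Hz.
  set (Zv := p + s * (P*u) - M*h + N*c) in *.
  set (dl := p - M*h) in *.
  clearbody Zv dl w.
  destruct (Z_le_gt_dec 0 w).
  - assert (P * (2*w+1) >= P) by nia. lia.
  - assert (P * (2*w+1) <= - P) by nia. lia.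
Qed.

Definition code N Bz M P Q f f' s b : Z :=
  piZ N s b f * M + ((zrep N (oZ N Bz f s b f') + M) / (2*P)) * P + s / Q.

Lemma code_bound N Bz M P Q q f f' s b :
  N > 0 -> Bz > 0 -> Bz * M = N -> N = P * Q -> P > 0 -> q * P = M ->
  0 <= s < N ->
  Z.abs (zrep N (oZ N Bz f s b f')) < M ->
  0 <= (zrep N (oZ N Bz f s b f') + M) / (2*P) * P + s / Q < M /\
  0 <= code N Bz M P Q f f' s b < N * M.
Proof.
  intros HN HB HBM HPQ HP HqM Hs Hz.
  assert (HQ : Q > 0) by nia.
  apply Z.abs_lt in Hz.
  set (v := zrep N (oZ N Bz f s b f') + M) in *.
  assert (Hv1 : 0 <= v / (2*P)) by (apply Z.div_pos; lia).
  assert (Hv2 : v / (2*P) < q).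
  { apply Z.div_lt_upper_bound; nia. }
  assert (Hs1 : 0 <= s / Q) by (apply Z.div_pos; lia).
  assert (Hs2 : s / Q < P).
  { apply Z.div_lt_upper_bound; nia. }
  assert (Hp : 0 <= piZ N s b f < N) by (apply Z.mod_pos_bound; lia).
  assert (H1 : 0 <= v / (2*P) * P + s / Q < M) by nia.
  split; auto. unfold code. fold v. nia.
Qed.

Lemma code_inj N Bz M P Q q kN kQ u f f' s1 b1 s2 b2 :
  N > 0 -> Bz > 0 -> Bz * M = N -> N = P * Q -> P > 0 -> q * P = M ->
  0 <= kN -> N = 2^kN -> 0 <= kQ -> Q = 2^kQ -> (exists Q', Q = 2*Q') ->
  f' - f = P * u -> Z.odd u = true ->
  Z.odd s1 = true -> Z.odd s2 = true -> 0 <= s1 < N -> 0 <= s2 < N ->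
  0 <= b1 < N -> 0 <= b2 < N ->
  Z.abs (zrep N (oZ N Bz f s1 b1 f')) < M ->
  Z.abs (zrep N (oZ N Bz f s2 b2 f')) < M ->
  code N Bz M P Q f f' s1 b1 = code N Bz M P Q f f' s2 b2 ->
  s1 = s2 /\ b1 = b2.
Proof.
  intros HN HB HBM HPQ HP HqM HkN HNk HkQ HQk [Q' HQ'] HD Hu Hs1 Hs2 Hs1r Hs2r Hb1 Hb2 Hz1 Hz2 Hc.
  destruct (code_bound N Bz M P Q q f f' s1 b1) as [I1 _]; auto.
  destruct (code_bound N Bz M P Q q f f' s2 b2) as [I2 _]; auto.
  assert (HQ : Q > 0) by nia.
  unfold code in Hc.
  set (p1 := piZ N s1 b1 f) in *. set (p2 := piZ N s2 b2 f) in *.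
  set (z1 := zrep N (oZ N Bz f s1 b1 f')) in *.
  set (z2 := zrep N (oZ N Bz f s2 b2 f')) in *.
  destruct (Z.div_mod_unique M p1 p2 ((z1 + M) / (2 * P) * P + s1 / Q)
              ((z2 + M) / (2 * P) * P + s2 / Q)) as [Ep Ei]; [lia|lia|lia|].
  assert (Hs1q : 0 <= s1 / Q < P) by (split; [apply Z.div_pos|apply Z.div_lt_upper_bound]; nia).
  assert (Hs2q : 0 <= s2 / Q < P) by (split; [apply Z.div_pos|apply Z.div_lt_upper_bound]; nia).
  destruct (Z.div_mod_unique P ((z1 + M) / (2 * P)) ((z2 + M) / (2 * P)) (s1/Q) (s2/Q))
    as [Ev Es]; [lia|lia|lia|].
  assert (Eh : hZ N Bz s1 b1 f = hZ N Bz s2 b2 f).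
  { unfold hZ. fold p1 p2. rewrite Ep. reflexivity. }
  destruct (o_decomp N Bz M s1 b1 f f' HN HB HBM) as [c1 Hc1].
  destruct (o_decomp N Bz M s2 b2 f f' HN HB HBM) as [c2 Hc2].
  fold z1 p1 in Hc1. fold z2 p2 in Hc2. rewrite Eh, Ep in Hc1.
  destruct (odd_ex _ Hs1) as [t1 Ht1]. destruct (odd_ex _ Hs2) as [t2 Ht2].
  assert (Hdiff : (z1 + M) - (z2 + M) = (2*P) * ((t1-t2)*u + Q'*(c1-c2))).
  { rewrite Hc1, Hc2, HD, Ht1, Ht2, HPQ, HQ'. ring. }
  assert (Ez : z1 = z2).
  { pose proof (Z.div_mod (z1+M) (2*P)) as D1.
    pose proof (Z.div_mod (z2+M) (2*P)) as D2.
    pose proof (Z.mod_pos_bound (z1+M) (2*P)) as R1.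
    pose proof (Z.mod_pos_bound (z2+M) (2*P)) as R2.
    set (K := (t1 - t2) * u + Q' * (c1 - c2)) in *.
    rewrite Ev in D1.
    set (d := (z2 + M) / (2 * P)) in *.
    set (r1 := (z1 + M) mod (2 * P)) in *.
    set (r2 := (z2 + M) mod (2 * P)) in *.
    clearbody K d r1 r2.
    assert (E2 : 2*P*0 + r1 = 2*P*K + r2) by lia.
    destruct (Z.div_mod_unique (2*P) 0 K r1 r2) as [EK Er]; [lia|lia|exact E2|].
    lia. }
  assert (Hq : (Q | (s1 - s2) * u)).
  { exists (c2 - c1).
    assert (P * ((s1 - s2) * u) = P * ((c2 - c1) * Q)).
    { assert (E : z1 - z2 = 0) by lia. rewrite Hc1, Hc2, HD, HPQ in E. lia. }
    apply Z.mul_reg_l with P; lia. }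
  rewrite HQk in Hq. apply pow2_gauss in Hq; auto. rewrite <- HQk in Hq.
  destruct Hq as [e He].
  pose proof (Z.div_mod s1 Q) as D1. pose proof (Z.div_mod s2 Q) as D2.
  pose proof (Z.mod_pos_bound s1 Q) as R1. pose proof (Z.mod_pos_bound s2 Q) as R2.
  rewrite Es in D1.
  set (d := s2 / Q) in *. set (r1 := s1 mod Q) in *. set (r2 := s2 mod Q) in *.
  clearbody d r1 r2.
  assert (E2 : Q*0 + r1 = Q*e + r2) by lia.
  destruct (Z.div_mod_unique Q 0 e r1 r2) as [Ee Er]; [lia|lia|exact E2|].
  assert (Es12 : s1 = s2) by lia.
  split; auto. clear Ht1 Ht2 Hdiff. subst s2.
  assert (Hb : (N | (b2 - b1) * s1)).
  { unfold p1, p2, piZ in Ep. rewrite !Z.mod_eq in Ep by lia.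
    exists (s1 * (f - b1) / N - s1 * (f - b2) / N).
    replace ((b2-b1)*s1) with (s1*(f-b1) - s1*(f-b2)) by ring. lia. }
  rewrite HNk in Hb. apply pow2_gauss in Hb; auto. rewrite <- HNk in Hb.
  destruct Hb as [e' He'].
  destruct (Z_le_gt_dec 0 e'); [destruct (Z_le_gt_dec e' 0)|].
  - assert (e' = 0) by lia. subst. lia.
  - assert (e' * N >= N) by nia. lia.
  - assert (e' * N <= - N) by nia. lia.
Qed.

Lemma odd_of_nat (s : nat) : Z.odd (Z.of_nat (2*s+1)) = true.
Proof.
  replace (Z.of_nat (2*s+1)) with (1 + 2 * Z.of_nat s) by lia.
  apply Z.odd_add_mul_2.
Qed.

Lemma count_bound (n B kn ka : nat) (f f' : Z) :
  n = (2^kn)%nat -> B = (2^ka)%nat -> (1 <= ka <= kn)%nat ->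
  0 <= f < Z.of_nat n -> 0 <= f' < Z.of_nat n -> f <> f' ->
  (Rsum_nat (n/2) (fun s => Rsum_nat n (fun b =>
     if Z.abs (zrep (Z.of_nat n) (oZ (Z.of_nat n) (Z.of_nat B) f
            (Z.of_nat (2*s+1)) (Z.of_nat b) f')) <? Z.of_nat (n/B)
     then 1 else 0)) <= INR (n * (n/B)))%R.
Proof.
  intros Hn HB Hk Hf Hf' Hff.
  assert (Hm : (n / B = 2^(kn-ka))%nat).
  { subst. replace kn with ((kn - ka) + ka)%nat at 1 by lia.
    rewrite Nat.pow_add_r, Nat.div_mul; auto. apply Nat.pow_nonzero; lia. }
  assert (Hn2 : (n = 2 * (n/2))%nat).
  { subst. replace kn with (S (kn - 1)) by lia. rewrite Nat.pow_succ_r'.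
    rewrite Nat.mul_comm, Nat.div_mul by lia. lia. }
  set (N := Z.of_nat n). set (Bz := Z.of_nat B). set (M := Z.of_nat (n/B)).
  set (kN := Z.of_nat kn). set (eM := Z.of_nat (kn - ka)).
  assert (HNk : N = 2^kN) by (unfold N, kN; rewrite Hn, Nat2Z.inj_pow; reflexivity).
  assert (HMk : M = 2^eM) by (unfold M, eM; rewrite Hm, Nat2Z.inj_pow; reflexivity).
  assert (HBk : Bz = 2^(Z.of_nat ka)) by (unfold Bz; rewrite HB, Nat2Z.inj_pow; reflexivity).
  assert (HBM : Bz * M = N).
  { rewrite HNk, HMk, HBk, <- Z.pow_add_r by lia. f_equal. unfold kN, eM. lia. }
  assert (HN : N > 0) by (rewrite HNk; pose proof (Z.pow_pos_nonneg 2 kN); lia).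
  assert (HBp : Bz > 0) by (rewrite HBk; pose proof (Z.pow_pos_nonneg 2 (Z.of_nat ka)); lia).
  assert (HMp : M > 0) by (rewrite HMk; pose proof (Z.pow_pos_nonneg 2 eM); lia).
  destruct (valuation (f' - f)) as [j [u [Hj [HD Hu]]]]; [lia|].
  assert (HjN : j < kN).
  { destruct (Z_lt_ge_dec j kN) as [|Hge]; auto.
    assert (2^kN <= 2^j) by (apply Z.pow_le_mono_r; lia).
    assert (Z.abs u >= 1) by (destruct u; simpl in Hu; lia).
    assert (2^j > 0) by (apply Z.lt_gt, Z.pow_pos_nonneg; lia).
    assert (Z.abs (f'-f) = 2^j * Z.abs u) by (rewrite HD, Z.abs_mul, Z.abs_eq; lia).
    assert (Z.abs (f' - f) < N) by lia. nia. }
  set (P := 2^j). set (Q := 2^(kN - j)). set (Q' := 2^(kN - j - 1)).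
  assert (HPp : P > 0) by (apply Z.lt_gt, Z.pow_pos_nonneg; lia).
  assert (HPQ : N = P * Q) by (rewrite HNk; unfold P, Q; rewrite <- Z.pow_add_r by lia; f_equal; lia).
  assert (HQQ : Q = 2 * Q').
  { unfold Q, Q'. rewrite <- Z.pow_succ_r by lia. f_equal. lia. }
  fold N Bz M.
  destruct (Z_le_gt_dec j eM) as [HjM|HjM].
  - set (q := 2^(eM - j)).
    assert (HqP : q * P = M) by (rewrite HMk; unfold q, P; rewrite <- Z.pow_add_r by lia; f_equal; lia).
    apply count_inj with (Phi := fun s b => Z.to_nat (code N Bz M P Q f f' (Z.of_nat (2*s+1)) (Z.of_nat b))).
    + intros s b Hs Hb Hhit. apply Z.ltb_lt in Hhit.
      destruct (code_bound N Bz M P Q q f f' (Z.of_nat (2*s+1)) (Z.of_nat b)) as [_ Hc]; auto; [lia|].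
      fold N M in Hc. lia.
    + intros s1 b1 s2 b2 Hs1 Hb1 Hs2 Hb2 H1 H2 Heq. apply Z.ltb_lt in H1, H2.
      destruct (code_bound N Bz M P Q q f f' (Z.of_nat (2*s1+1)) (Z.of_nat b1)) as [_ Hc1]; auto; [lia|].
      destruct (code_bound N Bz M P Q q f f' (Z.of_nat (2*s2+1)) (Z.of_nat b2)) as [_ Hc2]; auto; [lia|].
      destruct (code_inj N Bz M P Q q kN (kN - j) u f f' (Z.of_nat (2*s1+1)) (Z.of_nat b1)
                 (Z.of_nat (2*s2+1)) (Z.of_nat b2)) as [E1 E2]; auto; try lia.
      * exists Q'; auto.
      * apply odd_of_nat.
      * apply odd_of_nat.
  - apply count_inj with (Phi := fun _ _ => 0%nat).
    + intros s b Hs Hb Hhit. exfalso. apply Z.ltb_lt in Hhit.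
      apply (no_hit N Bz M P Q' u (Z.of_nat (2*s+1)) (Z.of_nat b) f f'); auto.
      * rewrite <- HQQ; auto.
      * rewrite HMk. unfold P. rewrite <- Z.pow_succ_r by lia. apply Z.pow_le_mono_r; lia.
      * apply odd_of_nat.
    + intros s1 b1 s2 b2 Hs1 Hb1 Hs2 Hb2 H1 H2 Heq. exfalso. apply Z.ltb_lt in H1.
      apply (no_hit N Bz M P Q' u (Z.of_nat (2*s1+1)) (Z.of_nat b1) f f'); auto.
      * rewrite <- HQQ; auto.
      * rewrite HMk. unfold P. rewrite <- Z.pow_succ_r by lia. apply Z.pow_le_mono_r; lia.
      * apply odd_of_nat.
Qed.

End ZS.

Lemma exp_le_mono x y : x <= y -> exp x <= exp y.
Proof. intros [H|H]; [left; apply exp_increasing; auto| subst; lra]. Qed.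

Lemma eps_bounds F : 0 < eps F <= 1.
Proof.
  unfold eps. split; [apply pow_lt; lra|].
  rewrite <- (pow1 (F-1)). apply pow_incr. lra.
Qed.

Lemma pointwise (n B F m : nat) (G : Z -> R) (lam : R) (x : Z) :
  flat_filter n B F G -> n = (B * m)%nat -> (0 < m)%nat -> (0 < B)%nat ->
  (Z.of_nat n = 2 * (Z.of_nat n / 2))%Z -> 0 <= lam ->
  exp (lam * Gat (Z.of_nat n) G x) <=
  exp (lam * eps F) * (1 + (exp (lam * (1 - eps F)) - 1) *
     (if (Z.abs (zrep (Z.of_nat n) x) <? Z.of_nat m)%Z then 1 else 0)).
Proof.
  intros [_ Hff] Hnm Hm HB HN2 Hl.
  unfold Gat. set (z := zrep (Z.of_nat n) x).
  assert (Hz : (- (Z.of_nat n / 2) <= z < Z.of_nat n / 2)%Z).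
  { unfold z, zrep. pose proof (Z.mod_pos_bound (x + Z.of_nat n / 2) (Z.of_nat n)).
    assert (Z.of_nat n > 0)%Z by lia. lia. }
  destruct (Hff z Hz) as [[G0 G1] [_ He]].
  pose proof (eps_bounds F) as Eb.
  destruct (Z.ltb_spec (Z.abs z) (Z.of_nat m)) as [Hh|Hh].
  - rewrite Rmult_1_r. replace (1 + (exp (lam * (1 - eps F)) - 1)) with (exp (lam * (1 - eps F))) by ring.
    rewrite <- exp_plus. apply exp_le_mono. nra.
  - rewrite Rmult_0_r, Rplus_0_r, Rmult_1_r. apply exp_le_mono.
    apply Rmult_le_compat_l; auto.
    assert (Hw : IZR (Z.abs z) >= INR m).
    { rewrite INR_IZR_INZ. apply Rle_ge, IZR_le. lia. }
    assert (HmR : 0 < INR m) by (apply lt_0_INR; lia).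
    assert (HBR : 0 < INR B) by (apply lt_0_INR; lia).
    assert (HnB : INR n / INR B = INR m) by (rewrite Hnm, mult_INR; field; lra).
    assert (Hb : INR n / (INR B * IZR (Z.abs z)) = INR m / IZR (Z.abs z)).
    { rewrite Hnm, mult_INR. field. lra. }
    specialize (He (ltac:(lra))). rewrite Hb in He.
    assert (0 <= INR m / IZR (Z.abs z) <= 1).
    { split. apply Rlt_le, Rdiv_lt_0_compat; lra.
      apply Rmult_le_reg_r with (IZR (Z.abs z)); [lra|].
      unfold Rdiv. rewrite Rmult_assoc, Rinv_l by lra. lra. }
    assert ((INR m / IZR (Z.abs z)) ^ (F - 1) <= 1).
    { rewrite <- (pow1 (F-1)). apply pow_incr. lra. }
    nra.
Qed.

Lemma fold_plus_init (l : list R) a : fold_right Rplus a l = a + fold_right Rplus 0 l.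
Proof. induction l; simpl; [ring| rewrite IHl; ring]. Qed.

Theorem lemma5p9 (n B F d : nat) (G : Z -> R) (lam beta : R)
  (f f' : Z) (sb : list (Z * Z)) :
  (exists k, n = (2 ^ k)%nat) -> (exists k, B = (2 ^ k)%nat) ->
  (2 <= B)%nat -> (B <= n)%nat ->
  (2 <= F)%nat -> Nat.Even F ->
  flat_filter n B F G ->
  (1 <= d)%nat -> 0 < beta ->
  (0 <= f < Z.of_nat n)%Z -> (0 <= f' < Z.of_nat n)%Z -> f <> f' ->
  (length sb < d)%nat ->
  (forall p, In p sb ->
     (0 <= fst p < Z.of_nat n)%Z /\ (0 <= snd p < Z.of_nat n)%Z) ->
  0 <= lam ->
  hr n B F d G lam beta f f' sb >=
  / (INR (n / 2) * INR n) *
  Rsum_nat (n / 2) (fun s =>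
    Rsum_nat n (fun b =>
      hr n B F d G lam beta f f'
         (sb ++ (Z.of_nat (2 * s + 1), Z.of_nat b) :: nil))).
Proof.
  intros [kn Hn] [ka HB] HB2 HBn HF2 HFe Hflat Hd Hbeta Hf Hf' Hff Hlen Hsb Hlam.
  assert (Hka : (1 <= ka)%nat).
  { destruct ka; [simpl in HB; lia|lia]. }
  assert (Hkak : (ka <= kn)%nat).
  { destruct (Nat.le_gt_cases ka kn) as [|Hlt]; auto.
    assert (2^kn < 2^ka)%nat by (apply Nat.pow_lt_mono_r; lia). lia. }
  set (m := (n / B)%nat).
  assert (Hm : (m = 2^(kn-ka))%nat).
  { unfold m. subst. replace kn with ((kn - ka) + ka)%nat at 1 by lia.
    rewrite Nat.pow_add_r, Nat.div_mul; auto. apply Nat.pow_nonzero; lia. }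
  assert (Hnm : (n = B * m)%nat).
  { rewrite Hm, HB, Hn, <- Nat.pow_add_r. f_equal. lia. }
  assert (Hm0 : (0 < m)%nat) by (rewrite Hm; apply Nat.neq_0_lt_0, Nat.pow_nonzero; lia).
  set (n2 := (n / 2)%nat).
  assert (Hn2 : (n = 2 * n2)%nat).
  { unfold n2. subst n. replace kn with (S (kn - 1)) by lia. rewrite Nat.pow_succ_r'.
    rewrite Nat.mul_comm, Nat.div_mul by lia. lia. }
  assert (HN2 : (Z.of_nat n = 2 * (Z.of_nat n / 2))%Z).
  { rewrite Hn2, Nat2Z.inj_mul. change (Z.of_nat 2) with 2%Z.
    rewrite (Z.mul_comm 2 (Z.of_nat n2)), Z.div_mul by lia. lia. }
  pose proof (count_bound n B kn ka f f' Hn HB (conj Hka Hkak) Hf Hf' Hff) as Hcnt.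
  fold m n2 in Hcnt.
  set (E := exp (lam * eps F)).
  set (Aa := exp (lam * (1 - eps F)) - 1).
  pose proof (eps_bounds F) as Eb.
  assert (HA : 0 <= Aa).
  { unfold Aa. assert (1 <= exp (lam * (1 - eps F))); [|lra].
    apply Rle_trans with (exp 0); [rewrite exp_0; lra| apply exp_le_mono; nra]. }
  assert (HE : 0 < E) by apply exp_pos.
  set (T := fun (s b : nat) => Gat (Z.of_nat n) G
             (oZ (Z.of_nat n) (Z.of_nat B) f (Z.of_nat (2 * s + 1)) (Z.of_nat b) f')).
  set (X := fun (s b : nat) => if (Z.abs (zrep (Z.of_nat n) (oZ (Z.of_nat n) (Z.of_nat B) f
            (Z.of_nat (2*s+1)) (Z.of_nat b) f')) <? Z.of_nat m)%Z then 1 else 0).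
  set (S0 := fold_right Rplus 0 (map (fun p => Gat (Z.of_nat n) G
                 (oZ (Z.of_nat n) (Z.of_nat B) f (fst p) (snd p) f')) sb)).
  set (Mf := Mfun n B F lam).
  set (C := exp (- lam * beta) * exp (lam * S0) * Mf ^ (d - S (length sb))).
  assert (HMf : Mf = E * ((2 / INR B + 1 / INR n) * Aa + 1)) by reflexivity.
  assert (HMf0 : 0 <= Mf).
  { rewrite HMf. apply Rmult_le_pos; [lra|].
    assert (0 <= 2 / INR B + 1 / INR n).
    { assert (0 < INR B) by (apply lt_0_INR; lia). assert (0 < INR n) by (apply lt_0_INR; lia).
      assert (0 < 2 / INR B) by (apply Rdiv_lt_0_compat; lra).
      assert (0 < 1 / INR n) by (apply Rdiv_lt_0_compat; lra). lra. }
    nra. }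
  assert (HC : 0 <= C).
  { unfold C. apply Rmult_le_pos; [apply Rmult_le_pos; left; apply exp_pos|apply pow_le; auto]. }
  assert (Hl : hr n B F d G lam beta f f' sb = C * Mf).
  { unfold hr, C. fold S0 Mf. replace (d - length sb)%nat with (S (d - S (length sb))) by lia.
    simpl. ring. }
  assert (Hr : forall s b, hr n B F d G lam beta f f'
            (sb ++ (Z.of_nat (2 * s + 1), Z.of_nat b) :: nil) = C * exp (lam * T s b)).
  { intros s b. unfold hr, C. fold S0 Mf. rewrite length_app. simpl length.
    replace (length sb + 1)%nat with (S (length sb)) by lia.
    rewrite map_app, fold_right_app. cbn [fold_right map fst snd]. rewrite fold_plus_init. fold S0.
    rewrite Rplus_0_r, Rmult_plus_distr_l, exp_plus. unfold T. ring. }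
  rewrite Hl.
  unfold Rsum_nat.
  change (C * Mf >= / (INR n2 * INR n) *
    RS (seq 0 n2) (fun s => RS (seq 0 n) (fun b => hr n B F d G lam beta f f'
         (sb ++ (Z.of_nat (2 * s + 1), Z.of_nat b) :: nil)))).
  rewrite (RS_ext _ _ (fun s => C * RS (seq 0 n) (fun b => exp (lam * T s b)))).
  2:{ intros s _. rewrite <- RS_scal. apply RS_ext. intros b _. apply Hr. }
  rewrite RS_scal.
  assert (Hsum : RS (seq 0 n2) (fun s => RS (seq 0 n) (fun b => exp (lam * T s b))) <=
                 E * (INR n * INR n2 + Aa * RS (seq 0 n2) (fun s => RS (seq 0 n) (fun b => X s b)))).
  { apply Rle_trans with (RS (seq 0 n2) (fun s => E * (INR n + Aa * RS (seq 0 n) (fun b => X s b)))).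
    - apply RS_le. intros s _.
      apply Rle_trans with (RS (seq 0 n) (fun b => E * (1 + Aa * X s b))).
      + apply RS_le. intros b _. unfold T, X.
        apply (pointwise n B F m G lam _ Hflat Hnm Hm0 ltac:(clear -HB2; lia) HN2 Hlam).
      + rewrite RS_lin, RS_scal, length_seq. right; change (fun b : nat => X s b) with (X s); ring.
    - rewrite RS_lin, length_seq. rewrite <- RS_scal. lra. }
  assert (HK : RS (seq 0 n2) (fun s => RS (seq 0 n) (fun b => X s b)) <= INR (n * m)).
  { exact Hcnt. }
  set (K := RS (seq 0 n2) (fun s => RS (seq 0 n) (fun b => X s b))) in *.
  set (R1 := RS (seq 0 n2) (fun s => RS (seq 0 n) (fun b => exp (lam * T s b)))) in *.
  assert (HnR : INR n = 2 * INR n2) by (rewrite Hn2, mult_INR; simpl; ring).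
  assert (HnBR : INR n = INR B * INR m) by (rewrite Hnm, mult_INR; ring).
  assert (HBR : 0 < INR B) by (apply lt_0_INR; lia).
  assert (HmR : 0 < INR m) by (apply lt_0_INR; lia).
  rewrite mult_INR in HK.
  assert (Hn2p : 0 < INR n2).
  { apply lt_0_INR. clear -Hn2 Hnm HB2 Hm0. nia. }
  assert (Hpos : 0 < INR n2 * INR n) by (rewrite HnR; nra).
  apply Rle_ge.
  rewrite <- Rmult_assoc, (Rmult_comm _ C), Rmult_assoc.
  apply Rmult_le_compat_l; auto.
  assert (Hgoal : / (INR n2 * INR n) * (E * (INR n * INR n2 + Aa * K)) <= Mf).
  { rewrite HMf.
    assert (Hk2 : K / (INR n2 * INR n) <= 2 / INR B).
    { apply Rle_trans with (INR n * INR m / (INR n2 * INR n)).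
      - unfold Rdiv. apply Rmult_le_compat_r; [left; apply Rinv_0_lt_compat; auto|auto].
      - right. rewrite HnR in *. field_simplify_eq; [|lra].
        nra. }
    assert (Hn0 : 0 < 1 / INR n) by (apply Rdiv_lt_0_compat; lra).
    replace (/ (INR n2 * INR n) * (E * (INR n * INR n2 + Aa * K)))
      with (E * (1 + Aa * (K / (INR n2 * INR n)))) by (field; lra).
    apply Rmult_le_compat_l; [lra|]. nra. }
  apply Rle_trans with (/ (INR n2 * INR n) * (E * (INR n * INR n2 + Aa * K))); auto.
  apply Rmult_le_compat_l; [left; apply Rinv_0_lt_compat; auto|auto].
Qed.
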